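(* Let $n\ge 2$, $N>0$, $B>0$, $\alpha>1$, $0<\beta<1$ and unit prices $\lambda_1,\dots,\lambda_n>0$. Consider the two-stage Stackelberg game in which the platform (leader) chooses a reward $R\in[0,B]$, and then miners $s_1,\dots,s_n$ (followers) play the miners' game in which $s_i$ chooses $\mu_i\ge0$ with profit $P_i=\frac{\mu_i}{\sum_{j}\mu_j}RN-\lambda_i\mu_i$ (the fraction being $0$ if $\sum_j\mu_j=0$). The platform's utility is $$U(R,\boldsymbol{\mu})=\alpha\left[\sigma\Big(\beta\sum_{i=1}^n\mu_i\Big)-\tfrac12\right]-R,\qquad \sigma(x)=\frac{1}{1+e^{-x}}.$$ Then there exists a unique Stackelberg equilibrium $(\boldsymbol{\mu}^*,R^* )$ of this game.
   Context: For each $R\in[0,B]$ the miners' game has a unique Nash equilibrium $\boldsymbol{\mu}^{NE}(R)$ (a profile with $\mu_i\ge0$ from which no miner can strictly increase its profit by a unilateral deviation to another $\mu_i\ge 0$). A Stackelberg equilibrium is a pair $(\boldsymbol{\mu}^*,R^* )$ with $R^*\in[0,B]$ such that $\boldsymbol{\mu}^*=\boldsymbol{\mu}^{NE}(R^* )$ (i.e. $P_i(\mu_i^*\mid\boldsymbol{\mu}^*_{-i},R^* )\ge P_i(\mu_i\mid\boldsymbol{\mu}^*_{-i},R^* )$ for all $i$ and all $\mu_i\ge0$) and $U(R^*,\boldsymbol{\mu}^{NE}(R^* ))\ge U(R,\boldsymbol{\mu}^{NE}(R))$ for all $R\in[0,B]$. *)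

(* Defs.v *)
From mathcomp Require Import all_boot all_order all_algebra.
From mathcomp Require Import reals sequences exp.
Set Implicit Arguments. Unset Strict Implicit. Unset Printing Implicit Defensive.
Import Order.TTheory GRing.Theory Num.Theory.
Local Open Scope ring_scope.

Section Game.
Variables (R : realType) (n : nat).

Definition total (mu : 'I_n -> R) : R := \sum_(j < n) mu j.

Definition profit (N : R) (lam : 'I_n -> R) (Rw : R) (mu : 'I_n -> R) (i : 'I_n) : R :=
  (if total mu == 0 then 0 else mu i / total mu) * Rw * N - lam i * mu i.

Definition deviate (mu : 'I_n -> R) (i : 'I_n) (x : R) : 'I_n -> R :=
  fun j => if j == i then x else mu j.

Definition is_NE (N : R) (lam : 'I_n -> R) (Rw : R) (mu : 'I_n -> R) : Prop :=
  (forall i, 0 <= mu i) /\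
  forall i (x : R), 0 <= x ->
    profit N lam Rw (deviate mu i x) i <= profit N lam Rw mu i.

Definition sigmoid (x : R) : R := 1 / (1 + expR (- x)).

Definition utility (alpha beta : R) (Rw : R) (mu : 'I_n -> R) : R :=
  alpha * (sigmoid (beta * total mu) - 1 / 2) - Rw.

(* Stackelberg equilibrium: mu* is the NE at R*, and R* maximizes
   U(R, mu^NE(R)) over [0,B]; mu^NE(R) ranges over the (unique) NE at R. *)
Definition is_SE (N B alpha beta : R) (lam : 'I_n -> R)
    (mu : 'I_n -> R) (Rs : R) : Prop :=
  [/\ 0 <= Rs <= B, is_NE N lam Rs mu &
      forall (Rw : R) (nu : 'I_n -> R), 0 <= Rw <= B -> is_NE N lam Rw nu ->
        utility alpha beta Rw nu <= utility alpha beta Rs mu].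

End Game.

(* Main.v *)
Require Import Defs.
From mathcomp Require Import all_boot all_order all_algebra.
From mathcomp Require Import reals sequences exp.
From mathcomp Require Import boolp classical_sets topology normedtype derive.
From mathcomp Require Import ring lra.
Import Order.TTheory GRing.Theory Num.Theory.
Import numFieldNormedType.Exports.
Local Open Scope ring_scope.

Section Real.
Variable R : realType.

Lemma NE_cond (a T S V l : R) : 0 <= a -> 0 < T -> S = a + T -> 0 < V -> 0 < l ->
  (forall x, 0 <= x -> (x - a) * (V * T / ((x + T) * S)) - (x - a) * l <= 0) ->
  V * T <= l * S ^+ 2 /\ (0 < a -> l * S ^+ 2 <= V * T).
Proof.
move=> a0 T0 HS V0 l0 H.
have S0 : 0 < S by rewrite HS; lra.
split.
  rewrite leNgt; apply/negP => Hlt.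
  set y0 := V * T / (l * S).
  have lS0 : 0 < l * S by rewrite mulr_gt0.
  have Hy0 : y0 * (l * S) = V * T by rewrite /y0 divfK // gt_eqF.
  have Sy0 : S < y0 by rewrite /y0 ltr_pdivlMr //; nra.
  pose x := (S + y0) / 2 - T.
  have xa : 0 < x - a by rewrite /x; lra.
  have x0 : 0 <= x by rewrite /x; lra.
  have xT : x + T = (S + y0) / 2 by rewrite /x; ring.
  have := H x x0; rewrite xT.
  have D0 : 0 < (S + y0) / 2 * S by apply: mulr_gt0; lra.
  have : l < V * T / ((S + y0) / 2 * S).
    by rewrite ltr_pdivlMr //; nra.
  move=> h1 h2.
  have : (x - a) * l < (x - a) * (V * T / ((S + y0) / 2 * S)) by rewrite ltr_pM2l.
  lra.
move=> a0'.
rewrite leNgt; apply/negP => Hlt.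
set y0 := V * T / (l * S).
have lS0 : 0 < l * S by rewrite mulr_gt0.
have Hy0 : y0 * (l * S) = V * T by rewrite /y0 divfK // gt_eqF.
have Sy0 : y0 < S by rewrite /y0 ltr_pdivrMr //; nra.
set y1 := Num.max T y0.
have y1T : T <= y1 by rewrite le_max lexx.
have y1y0 : y0 <= y1 by rewrite le_max lexx orbT.
have y1S : y1 < S by rewrite gt_max Sy0 andbT; lra.
pose x := (y1 + S) / 2 - T.
have xa : x - a < 0 by rewrite /x; lra.
have x0 : 0 <= x by rewrite /x; lra.
have xT : x + T = (y1 + S) / 2 by rewrite /x; ring.
have := H x x0; rewrite xT.
have D0 : 0 < (y1 + S) / 2 * S by apply: mulr_gt0; lra.
have : V * T / ((y1 + S) / 2 * S) < l.
  by rewrite ltr_pdivrMr //; nra.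
move=> h1 h2.
have : (x - a) * l < (x - a) * (V * T / ((y1 + S) / 2 * S)) by rewrite ltr_nM2l.
lra.
Qed.

Lemma NE_suff (a T S V l : R) : 0 <= a -> 0 < T -> S = a + T -> 0 < l ->
  V * T <= l * S ^+ 2 -> (0 < a -> l * S ^+ 2 <= V * T) ->
  forall x, 0 <= x -> (x - a) * (V * T / ((x + T) * S) - l) <= 0.
Proof.
move=> a0 T0 HS l0 H1 H2 x x0.
have S0 : 0 < S by rewrite HS; lra.
have xT0 : 0 < x + T by lra.
have [a_gt0|a_le0] := ltrP 0 a.
  have E : V * T = l * S ^+ 2 by apply/eqP; rewrite eq_le H1 H2.
  rewrite E.
  have -> : (x - a) * (l * S ^+ 2 / ((x + T) * S) - l) = - (l * (x - a) ^+ 2 / (x + T)).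
    rewrite HS; field; apply/andP; split; rewrite gt_eqF //; lra.
  rewrite oppr_le0; apply: divr_ge0; last lra.
  by apply: mulr_ge0; [lra| exact: sqr_ge0].
have a00 : a = 0 by apply/eqP; rewrite eq_le a_le0 a0.
rewrite a00 subr0.
have ST : S = T by rewrite HS a00 add0r.
have : V * T / ((x + T) * S) <= l.
  rewrite ler_pdivrMr; last by apply: mulr_gt0.
  rewrite ST in H1 *.
  have -> : l * ((x + T) * T) = l * T ^+ 2 + l * x * T by ring.
  have : 0 <= l * x * T by rewrite !mulr_ge0 //; lra.
  lra.
move=> h; rewrite mulr_ge0_le0 //; lra.
Qed.

Lemma sig_mid (a b : R) : 0 <= a -> a < b ->
  1 / (1 + expR (- a)) + 1 / (1 + expR (- b)) < 2 * (1 / (1 + expR (- ((a + b) / 2)))).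
Proof.
move=> a0 ab.
set p := expR (- (a / 2)); set q := expR (- (b / 2)).
have Ea : expR (- a) = p * p.
  rewrite /p /q -expRD; congr expR; lra.
have Eb : expR (- b) = q * q.
  rewrite /p /q -expRD; congr expR; lra.
have Em : expR (- ((a + b) / 2)) = p * q.
  rewrite /p /q -expRD; congr expR; lra.
rewrite Ea Eb Em.
have p0 : 0 < p by exact: expR_gt0.
have q0 : 0 < q by exact: expR_gt0.
have qp : q < p by rewrite ltr_expR; lra.
have p1 : p <= 1 by rewrite -expR0 ler_expR; lra.
have pq1 : p * q < 1 by nra.
rewrite -subr_gt0.
have -> : 2 * (1 / (1 + p * q)) - (1 / (1 + p * p) + 1 / (1 + q * q)) =
  (1 - p * q) * (p - q) ^+ 2 / ((1 + p * q) * (1 + p * p) * (1 + q * q)).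
  field; rewrite !gt_eqF //; nra.
apply: divr_gt0; last by rewrite !mulr_gt0 //; nra.
apply: mulr_gt0; first lra.
rewrite exprn_gt0 // ?subr_gt0 //.
Qed.

End Real.

Local Notation tot := Defs.total.
Section Game2.
Variables (R : realType) (n : nat) (N : R) (lam : 'I_n -> R).
Hypothesis HN : 0 < N.
Hypothesis Hl : forall i, 0 < lam i.

Definition wf (s : R) (i : 'I_n) : R := Num.max 0 (1 - lam i * s).
Definition hf (s : R) : R := \sum_(i < n) wf s i.

Lemma wf_ge0 s i : 0 <= wf s i.
Proof. by rewrite /wf le_max lexx. Qed.

Lemma wf_pos s i : 0 < 1 - lam i * s -> wf s i = 1 - lam i * s.
Proof. by move=> h; rewrite /wf; apply/max_idPr; rewrite ltW. Qed.

Lemma wf_neg s i : 1 - lam i * s <= 0 -> wf s i = 0.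
Proof. by move=> h; rewrite /wf; apply/max_idPl. Qed.

Lemma wf_lt1 s i : 0 < s -> wf s i < 1.
Proof.
move=> s0; rewrite /wf gt_max ltr01 /=.
have := Hl i => l0; have : 0 < lam i * s by rewrite mulr_gt0.
lra.
Qed.

Lemma hf_uniq s1 s2 : hf s1 = 1 -> hf s2 = 1 -> s1 = s2.
Proof.
wlog : s1 s2 / s1 <= s2.
  move=> W h1 h2; have [le|le] := lerP s1 s2; first exact: W.
  by apply/esym/W => //; rewrite ltW.
move=> le h1 h2.
rewrite le_eqVlt in le; case/orP: le => [/eqP //|lt].
exfalso.
have mono : forall j, wf s2 j <= wf s1 j.
  move=> j; rewrite /wf ge_max le_max lexx /= le_max; apply/orP; right.
  have := Hl j; nra.
case: (pickP (fun i => 0 < wf s2 i)) => [i Hi|H].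
  have Hi' : 0 < 1 - lam i * s2.
    by move: Hi; rewrite /wf lt_max ltxx.
  have : wf s2 i < wf s1 i.
    rewrite (wf_pos _ _ Hi') /wf lt_max; apply/orP; right.
    have := Hl i; nra.
  move=> strict.
  have : hf s2 < hf s1.
    rewrite /hf (bigD1 i) //= [X in _ < X](bigD1 i) //=.
    apply: ltr_leD => //; apply: ler_sum => j _; exact: mono.
  by rewrite h1 h2 ltxx.
have : hf s2 <= 0.
  rewrite /hf; apply: sumr_le0 => j _.
  by have := H j; move/negbT; rewrite -leNgt.
by rewrite h2; lra.
Qed.


Lemma cont_sum (I : Type) (r : seq I) (P : pred I) (F : I -> R -> R) :
  (forall i, continuous (F i)) -> continuous (fun x => \sum_(i <- r | P i) F i x).
Proof.
move=> cF; elim: r => [|a r IH].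
  by under eq_fun do rewrite big_nil; exact: cst_continuous.
under eq_fun do rewrite big_cons.
case: (P a) => //.
move=> x; exact: (@continuousD _ _ _ (F a) (fun x => \sum_(i <- r | P i) F i x) x (cF a x) (IH x)).
Qed.

Lemma cont_w (l : R) : continuous (fun s : R => Num.max 0 (1 - l * s)).
Proof.
move=> x.
have := @continuous_max _ _ (fun _ => 0) (fun s : R => 1 - l * s) x.
apply.
  exact: cst_continuous.
apply: continuousB; first exact: cst_continuous.
apply: continuousM; first exact: cst_continuous.
exact: cvg_id.
Qed.

Lemma hf_exists : (1 < n)%N -> exists2 s, 0 < s & hf s = 1.
Proof.
move=> n1.
have h0 : hf 0 = n%:R.
  rewrite /hf (eq_bigr (fun _ => 1)); last by move=> i _; rewrite /wf mulr0 subr0; apply/max_idPr.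
  by rewrite sumr_const card_ord.
pose b := \sum_(i < n) (lam i)^-1.
have hb : hf b = 0.
  rewrite /hf big1 // => i _; apply: wf_neg.
  have : (lam i)^-1 <= b.
    rewrite /b (bigD1 i) //= lerDl; apply: sumr_ge0 => j _.
    by rewrite invr_ge0 ltW.
  move=> hb; have l0 := Hl i.
  have : lam i * (lam i)^-1 <= lam i * b by rewrite ler_wpM2l // ltW.
  by rewrite mulfV ?gt_eqF //; lra.
have b0 : 0 <= b by rewrite /b; apply: sumr_ge0 => j _; rewrite invr_ge0 ltW.
have [c cin hc] : exists2 c, c \in `[0, b] & hf c = 1.
  apply: IVT => //.
    apply: continuous_subspaceT; rewrite /hf.
    move=> x; have H := (cont_sum _ (index_enum _) xpredT (fun i s => wf s i) (fun i => cont_w (lam i)) x); refine H.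
  rewrite h0 hb ge_min le_max ler01 orbT /=.
  by apply/orP; left; rewrite ler1n; apply: ltnW.
move: cin; rewrite in_itv /= => /andP [c0 _].
exists c => //; rewrite lt_neqAle c0 andbT; apply/eqP => c00.
move: hc; rewrite -c00 h0 => /eqP; rewrite pnatr_eq1 => /eqP n11.
by move: n1; rewrite n11.
Qed.


Lemma total_dev (mu : 'I_n -> R) i x : tot (deviate mu i x) = x + (tot mu - mu i).
Proof.
rewrite /Defs.total (bigD1 i) //= [X in _ = _ + (X - _)](bigD1 i) //= /deviate eqxx.
rewrite (eq_bigr mu); last by move=> j /negbTE ->.
ring.
Qed.

Lemma profit_diff (Rw : R) (mu : 'I_n -> R) i x :
  0 < tot mu - mu i -> 0 < tot mu -> 0 <= x ->
  profit N lam Rw (deviate mu i x) i - profit N lam Rw mu i =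
  (x - mu i) * (Rw * N * (tot mu - mu i) / ((x + (tot mu - mu i)) * tot mu))
    - (x - mu i) * lam i.
Proof.
move=> T0 S0 x0; rewrite /profit total_dev.
have -> : (x + (tot mu - mu i) == 0) = false by rewrite gt_eqF //; lra.
rewrite (gt_eqF S0) /deviate eqxx.
field; rewrite !gt_eqF //; lra.
Qed.

Lemma T_ge0 (nu : 'I_n -> R) i : (forall j, 0 <= nu j) -> 0 <= tot nu - nu i.
Proof.
move=> nn.
have -> : tot nu - nu i = \sum_(j < n | j != i) nu j by rewrite /Defs.total (bigD1 i) //=; ring.
exact: sumr_ge0.
Qed.

Lemma NE_T_pos Rw nu : 0 < Rw -> is_NE N lam Rw nu -> forall i, 0 < tot nu - nu i.
Proof.
move=> R0 [nn NE] i.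
have T0 := T_ge0 nu i nn.
rewrite lt_neqAle T0 andbT; apply/negP => /eqP T00.
have V0 : 0 < Rw * N by rewrite mulr_gt0.
have Hdev : forall x, 0 < x -> profit N lam Rw (deviate nu i x) i = Rw * N - lam i * x.
  move=> x x0; rewrite /profit total_dev -T00 addr0 (gt_eqF x0) /deviate eqxx divff ?gt_eqF //.
  by rewrite mul1r.
have l0 := Hl i.
have Stot : tot nu = nu i by rewrite -[tot nu]subr0 T00; ring.
have [a0|a0] := ltrP 0 (nu i).
  have := NE i (nu i / 2); rewrite Hdev; last lra.
  rewrite /profit Stot (gt_eqF a0) divff ?gt_eqF // mul1r.
  move=> h; have := h (ltW (divr_gt0 a0 (ltr0Sn _ _))); nra.
have a00 : nu i = 0 by apply/eqP; rewrite eq_le a0 nn.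
have := NE i (Rw * N / (2 * lam i)); rewrite Hdev; last by apply: divr_gt0 => //; lra.
rewrite /profit Stot a00 eqxx mul0r mul0r mulr0 subr0.
have -> : lam i * (Rw * N / (2 * lam i)) = Rw * N / 2 by field; rewrite gt_eqF //.
move=> h; have := h (ltW (divr_gt0 V0 (mulr_gt0 (ltr0Sn _ _) l0))); lra.
Qed.

Section WithS.
Variable s : R.
Hypothesis s0 : 0 < s.
Hypothesis hs : hf s = 1.
Hypothesis Hn : (1 < n)%N.

Definition muNE (Rw : R) : 'I_n -> R := fun i => Rw * N * s * wf s i.

Lemma muNE_tot Rw : tot (muNE Rw) = Rw * N * s.
Proof. by rewrite /Defs.total /muNE -mulr_sumr -/(hf s) hs mulr1. Qed.

Lemma NE_form Rw nu : 0 < Rw -> is_NE N lam Rw nu -> nu = muNE Rw.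
Proof.
move=> R0 NEh.
have T0 := NE_T_pos _ _ R0 NEh.
case: NEh => nn NE.
set S := tot nu in T0 *.
set V := Rw * N.
have V0 : 0 < V by rewrite mulr_gt0.
have i0 : 'I_n := Ordinal (ltnW Hn).
have S0 : 0 < S by have := T0 i0; have := nn i0; lra.
have key : forall i, nu i = S * wf (S / V) i.
  move=> i; have Ti := T0 i; have l0 := Hl i.
  have [H1 H2] := @NE_cond R (nu i) (S - nu i) S V (lam i) (nn i) Ti (esym (subrKC _ _)) V0 l0
    (fun x x0 => ltac:(rewrite -(profit_diff Rw nu i x Ti S0 x0) subr_le0; exact: NE i x x0)).
  have [a0|a0] := ltrP 0 (nu i).
    have E : V * (S - nu i) = lam i * S ^+ 2 by apply/eqP; rewrite eq_le H1 H2.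
    have E2 : lam i * (S / V) = (S - nu i) / S.
      have -> : lam i * (S / V) = lam i * S ^+ 2 / (V * S) by field; rewrite !gt_eqF //.
      rewrite -E; field; rewrite !gt_eqF //.
    rewrite wf_pos E2.
      by field; rewrite gt_eqF //.
    have -> : 1 - (S - nu i) / S = nu i / S by field; rewrite gt_eqF //.
    exact: divr_gt0.
  have a00 : nu i = 0 by apply/eqP; rewrite eq_le a0 nn.
  rewrite wf_neg ?mulr0 //.
  rewrite subr_le0 mulrA ler_pdivlMr // mul1r.
  rewrite a00 subr0 in H1.
  have : V * S <= lam i * S * S by rewrite -mulrA -expr2.
  by rewrite ler_pM2r.
have hS : hf (S / V) = 1.
  have : S * hf (S / V) = S * 1.
    rewrite mulr1 /hf mulr_sumr {2}/S /Defs.total; apply: eq_bigr => i _; exact/esym/key.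
  by move/(mulfI (lt0r_neq0 S0)).
have SV : S / V = s by apply: hf_uniq.
apply: funext => i; rewrite key SV /muNE.
have -> : S = V * s by rewrite -SV; field; rewrite gt_eqF //.
by [].
Qed.


Lemma NE_zero nu : is_NE N lam 0 nu -> nu = muNE 0.
Proof.
move=> [nn NE]; apply: funext => i; rewrite /muNE !mul0r.
have := NE i 0 (lexx _); rewrite /profit /deviate eqxx !mulr0 !mul0r sub0r.
move=> h; have a0 := nn i; have l0 := Hl i.
apply/eqP; rewrite eq_le a0 andbT.
have : lam i * nu i <= 0 by lra.
by rewrite pmulr_rle0.
Qed.

Lemma NE_unique Rw nu : 0 <= Rw -> is_NE N lam Rw nu -> nu = muNE Rw.
Proof.
rewrite le_eqVlt => /orP [/eqP <-|R0]; first exact: NE_zero.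
exact: NE_form.
Qed.

Lemma muNE_NE Rw : 0 <= Rw -> is_NE N lam Rw (muNE Rw).
Proof.
move=> R0; split.
  move=> i; rewrite /muNE; apply: mulr_ge0; last exact: wf_ge0.
  by rewrite !mulr_ge0 // ltW.
move=> i x x0.
have l0 := Hl i.
rewrite le_eqVlt in R0; case/orP: R0 => [/eqP R00|R0].
  rewrite -R00 /profit /muNE !mulr0 !mul0r !mulr0 subr0 sub0r oppr_le0 /deviate eqxx.
  by rewrite mulr_ge0 // ltW.
rewrite -subr_le0.
set V := Rw * N.
have V0 : 0 < V by rewrite mulr_gt0.
have S0 : 0 < tot (muNE Rw) by rewrite muNE_tot mulr_gt0.
have T0 : 0 < tot (muNE Rw) - muNE Rw i.
  rewrite muNE_tot /muNE subr_gt0 gtr_pMr ?mulr_gt0 //.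
  exact: wf_lt1.
rewrite (profit_diff Rw (muNE Rw) i x T0 S0 x0) -mulrBr.
have a0 : 0 <= muNE Rw i.
  rewrite /muNE; apply: mulr_ge0; last exact: wf_ge0.
  by rewrite !mulr_ge0 // ltW.
have HS : tot (muNE Rw) = muNE Rw i + (tot (muNE Rw) - muNE Rw i) by ring.
move: T0 S0 a0 HS; rewrite muNE_tot /muNE -/V => T0 S0 a0 HS.
have [w0|w0] := ltrP 0 (1 - lam i * s).
  rewrite wf_pos // in T0 S0 a0 HS *.
  have E : V * (V * s - V * s * (1 - lam i * s)) = lam i * (V * s) ^+ 2 by ring.
  apply: (@NE_suff R _ _ _ _ _ a0 T0 HS l0) => //; first by rewrite E.
  by rewrite E.
rewrite wf_neg // in T0 S0 a0 HS *.
apply: (@NE_suff R _ _ _ _ _ a0 T0 HS l0) => //; last by rewrite mulr0 ltxx.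
have : 0 <= V * V * s * (lam i * s - 1).
  by apply: mulr_ge0; [rewrite !mulr_ge0 // ltW | lra].
move=> h.
have -> : V * (V * s - V * s * 0) = V * V * s by ring.
have -> : lam i * (V * s) ^+ 2 = V * V * s * (lam i * s - 1) + V * V * s by ring.
lra.
Qed.

End WithS.

End Game2.

Section Leader.
Variables (R : realType) (k alpha : R).

Definition FU (Rw : R) : R := alpha * (sigmoid (k * Rw) - 1 / 2) - Rw.

Lemma FU_cont : continuous FU.
Proof.
move=> x.
have h1 : {for x, continuous (fun y : R => - (k * y))}.
  apply: continuousN; apply: continuousM; first exact: cst_continuous.
  exact: cvg_id.
have h2 : {for x, continuous (fun y : R => expR (- (k * y)))}.
  apply: (@continuous_comp _ _ _ (fun y : R => - (k * y)) expR); [exact: h1 | exact: continuous_expR].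
have h3 : {for x, continuous (fun y : R => 1 + expR (- (k * y)))}.
  by apply: continuousD => //; exact: cst_continuous.
have h4 : {for x, continuous (fun y : R => (1 + expR (- (k * y)))^-1)}.
  by apply: continuousV => //; rewrite gt_eqF // ltr_pwDr ?expR_gt0.
have h5 : {for x, continuous (fun y : R => alpha * (sigmoid (k * y) - 1 / 2))}.
  rewrite /sigmoid.
  apply: continuousM; first exact: cst_continuous.
  apply: continuousB; last exact: cst_continuous.
  apply: continuousM => //; exact: cst_continuous.
have h6 : {for x, continuous (fun y : R => alpha * (sigmoid (k * y) - 1 / 2) - y)}.
  by apply: continuousB => //; exact: cvg_id.
exact: h6.
Qed.


Lemma FU_max B : 0 <= B -> exists2 c, 0 <= c <= B & forall t, 0 <= t <= B -> FU t <= FU c.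
Proof.
move=> B0.
have [c cin H] : exists2 c, c \in `[0, B] & forall t, t \in `[0, B] -> FU t <= FU c.
  apply: EVT_max => //; apply: continuous_subspaceT; exact: FU_cont.
move: cin; rewrite in_itv /= => cin.
exists c => // t tin; apply: H; by rewrite in_itv /=.
Qed.

Hypothesis k0 : 0 < k.
Hypothesis alpha0 : 0 < alpha.

Lemma FU_strict r1 r2 : 0 <= r1 -> r1 < r2 -> FU r1 + FU r2 < 2 * FU ((r1 + r2) / 2).
Proof.
move=> r10 r12.
have kr : k * r1 < k * r2 by rewrite ltr_pM2l.
have := @sig_mid R (k * r1) (k * r2) (mulr_ge0 (ltW k0) r10) kr.
have -> : (k * r1 + k * r2) / 2 = k * ((r1 + r2) / 2) by field.
rewrite /FU /sigmoid.
set s1 := 1 / (1 + expR (- (k * r1))).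
set s2 := 1 / (1 + expR (- (k * r2))).
set sm := 1 / (1 + expR (- (k * ((r1 + r2) / 2)))).
move=> h.
have : alpha * (s1 + s2) < alpha * (2 * sm) by rewrite ltr_pM2l.
lra.
Qed.

Lemma FU_uniq B r1 r2 : 0 <= r1 <= B -> 0 <= r2 <= B ->
  (forall t, 0 <= t <= B -> FU t <= FU r1) ->
  (forall t, 0 <= t <= B -> FU t <= FU r2) -> r1 = r2.
Proof.
wlog : r1 r2 / r1 <= r2.
  move=> W h1 h2 h3 h4; have [le|lt] := lerP r1 r2; first exact: W.
  by apply/esym/W => //; rewrite ltW.
move=> le /andP [r10 r1B] /andP [r20 r2B] H1 H2.
rewrite le_eqVlt in le; case/orP: le => [/eqP //|lt].
have hm : 0 <= (r1 + r2) / 2 <= B by apply/andP; split; lra.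
have := FU_strict _ _ r10 lt.
have := H1 _ hm; have := H2 _ hm.
lra.
Qed.

End Leader.

Theorem theorem4 (R : realType) (n : nat) (N B alpha beta : R)
  (lam : 'I_n -> R) :
  (2 <= n)%N -> 0 < N -> 0 < B -> 1 < alpha -> 0 < beta -> beta < 1 ->
  (forall i, 0 < lam i) ->
  exists (mu : 'I_n -> R) (Rs : R),
    is_SE N B alpha beta lam mu Rs /\
    forall (mu' : 'I_n -> R) (Rs' : R),
      is_SE N B alpha beta lam mu' Rs' -> mu' = mu /\ Rs' = Rs.
Proof.
move=> Hn N0 B0 a1 b0 b1 Hl.
have [s s0 hs] := hf_exists _ _ _ Hl Hn.
pose k := beta * (N * s).
have k0 : 0 < k by rewrite !mulr_gt0.
have a0 : 0 < alpha by lra.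
have UF : forall Rw, utility alpha beta Rw (muNE _ _ N lam s Rw) = FU _ k alpha Rw.
  move=> Rw; rewrite /utility /FU (muNE_tot _ _ _ _ _ hs).
  by have -> : beta * (Rw * N * s) = k * Rw by rewrite /k; ring.
have NEu := NE_unique _ _ _ _ N0 Hl _ hs Hn.
have NEe := muNE_NE _ _ _ _ N0 Hl _ s0 hs.
have [c cin cmax] := FU_max _ k alpha _ (ltW B0).
exists (muNE _ _ N lam s c), c; split.
  split => //; first exact: NEe (andP cin).1.
  move=> Rw nu Rin NEnu.
  rewrite (NEu Rw nu (andP Rin).1 NEnu) !UF.
  exact: cmax.
move=> mu' Rs' [Rin NE' opt].
have e := NEu Rs' mu' (andP Rin).1 NE'.
have eR : Rs' = c.
  apply: (FU_uniq _ _ _ k0 a0 _ _ _ Rin cin) => // t tin.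
  rewrite -!UF -e; apply: opt => //; exact: NEe (andP tin).1.
by rewrite e eR.
Qed.
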